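(* Let $\lambda_0,\lambda_1>0$, and let $\boldsymbol\alpha_0^\star$ and $\boldsymbol\alpha_1^\star$ be the optimal solutions of the dual problems $\max_{\boldsymbol\alpha\ge\mathbf0}D_{\lambda_0}(\boldsymbol\alpha)$ and $\max_{\boldsymbol\alpha\ge\mathbf0}D_{\lambda_1}(\boldsymbol\alpha)$, respectively. Then $$\Big\|\boldsymbol\alpha_1^\star-\frac{\lambda_0+\lambda_1}{2\lambda_0}\boldsymbol\alpha_0^\star\Big\|_2^2\le\Big\|\frac{\lambda_0-\lambda_1}{2\lambda_0}\boldsymbol\alpha_0^\star\Big\|_2^2.$$
   Context: Let $n,K,p\ge1$ be integers, $[n]=\{1,\dots,n\}$. For each $i\in[n]$ let $\mathbf x_i\in\mathbb R^p$ have nonnegative entries and let $\mathcal D_i,\mathcal S_i\subseteq[n]$ be sets of size $K$. Put $\mathbf c_{ij}=(\mathbf x_i-\mathbf x_j)\circ(\mathbf x_i-\mathbf x_j)$ (entrywise product). Vectors in $\mathbb R^{2nK}$ are indexed by the pairs $(i,l)$, $l\in\mathcal D_i$ (''different-class pairs'') and $(i,j)$, $j\in\mathcal S_i$ (''same-class pairs''). $\mathbf C\in\mathbb R^{p\times2nK}$ has column $\mathbf c_{il}$ for each different-class pair and $-\mathbf c_{ij}$ for each same-class pair. Fix $L\ge U\ge0$, $\eta>0$; let $\mathbf t\in\mathbb R^{2nK}$ have entry $L$ at different-class pairs and $-U$ at same-class pairs; $[z]_+=\max\{z,0\}$ entrywise; $\mathbf 1$ the all-ones vector. For $\lambda>0$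 and $\boldsymbol\alpha\in\mathbb R^{2nK}_{\ge0}$ define $$D_\lambda(\boldsymbol\alpha)=-\frac14\|\boldsymbol\alpha\|_2^2+\mathbf t^\top\boldsymbol\alpha-\frac{\lambda\eta}{2}\|\mathbf m_\lambda(\boldsymbol\alpha)\|_2^2,\qquad\mathbf m_\lambda(\boldsymbol\alpha)=\frac{1}{\lambda\eta}[\mathbf C\boldsymbol\alpha-\lambda\mathbf1]_+.$$ This is the dual of the primal problem $\min_{\mathbf m\ge\mathbf0}\sum_{i}\big[\sum_{l\in\mathcal D_i}([L-\mathbf m^\top\mathbf c_{il}]_+)^2+\sum_{j\in\mathcal S_i}([-U+\mathbf m^\top\mathbf c_{ij}]_+)^2\big]+\lambda(\mathbf m^\top\mathbf1+\frac\eta2\|\mathbf m\|_2^2)$. *)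

(* Defs.v *)
From HB Require Import structures.
From mathcomp Require Import all_boot all_order all_algebra.
Set Implicit Arguments. Unset Strict Implicit. Unset Printing Implicit Defensive.
Import Order.TTheory GRing.Theory Num.Theory.
Local Open Scope ring_scope.

(* Index set of R^{2nK}: different-class pairs (i,l), l \in D i, followed by
   same-class pairs (i,j), j \in S i. *)
Definition pidx (n : nat) (D S : 'I_n -> {set 'I_n}) : finType :=
  ({x : 'I_n * 'I_n | x.2 \in D x.1} + {x : 'I_n * 'I_n | x.2 \in S x.1})%type.

Section Dual.
Variables (R : realFieldType) (n p : nat) (D S : 'I_n -> {set 'I_n}).
Variable (x : 'I_n -> 'I_p -> R) (L U eta : R).

Definition cvec (i j : 'I_n) : 'I_p -> R := fun k => (x i k - x j k) ^+ 2.

Definition Ccol (a : pidx D S) : 'I_p -> R :=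
  match a with
  | inl d => cvec (sval d).1 (sval d).2
  | inr s => fun k => - cvec (sval s).1 (sval s).2 k
  end.

Definition Cmul (alpha : pidx D S -> R) : 'I_p -> R :=
  fun k => \sum_(a : pidx D S) Ccol a k * alpha a.

Definition tvec (a : pidx D S) : R :=
  match a with inl _ => L | inr _ => - U end.

Definition sqnorm {I : finType} (v : I -> R) : R := \sum_(a : I) v a ^+ 2.

Definition pos_part (z : R) : R := Num.max z 0.

Definition mvec (lam : R) (alpha : pidx D S -> R) : 'I_p -> R :=
  fun k => (lam * eta)^-1 * pos_part (Cmul alpha k - lam).

Definition Dual (lam : R) (alpha : pidx D S -> R) : R :=
  - (1/4) * sqnorm alpha + \sum_(a : pidx D S) tvec a * alpha a
  - (lam * eta) / 2 * sqnorm (mvec lam alpha).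

Definition dual_optimal (lam : R) (alpha : pidx D S -> R) : Prop :=
  (forall a, 0 <= alpha a) /\
  (forall beta : pidx D S -> R, (forall a, 0 <= beta a) -> Dual lam beta <= Dual lam alpha).

End Dual.

(* Main.v *)
Require Import Defs.
From HB Require Import structures.
From mathcomp Require Import all_boot all_order all_algebra.
From mathcomp Require Import ring lra.
Set Implicit Arguments. Unset Strict Implicit. Unset Printing Implicit Defensive.
Import Order.TTheory GRing.Theory Num.Theory.
Local Open Scope ring_scope.

Section Helpers.
Variables (R : realFieldType) (n p : nat) (D S : 'I_n -> {set 'I_n}).
Variable (x : 'I_n -> 'I_p -> R) (L U eta : R).

Lemma Cmul_comb (u v : R) (f g : pidx D S -> R) k :
  Cmul x (fun a => u * f a + v * g a) k = u * Cmul x f k + v * Cmul x g k.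
Proof.
rewrite /Cmul !mulr_sumr -big_split; apply: eq_bigr => a _ /=; ring.
Qed.

Lemma pos_ge0 (z : R) : 0 <= pos_part z.
Proof. by rewrite /pos_part le_max lexx orbT. Qed.

Lemma pos_ge (z : R) : z <= pos_part z.
Proof. by rewrite /pos_part le_max lexx. Qed.

Lemma pos_scale (c z : R) : 0 < c -> pos_part (c * z) = c * pos_part z.
Proof.
move=> hc; rewrite /pos_part [c * z]mulrC [c * Num.max _ _]mulrC maxr_pMl ?ltW // mul0r.
by [].
Qed.

Lemma pos_convex (e a b : R) : 0 <= e -> e <= 1 ->
  pos_part ((1 - e) * a + e * b) ^+ 2
  <= (1 - e) * pos_part a ^+ 2 + e * pos_part b ^+ 2.
Proof.
move=> e0 e1.
have pa := pos_ge0 a; have pb := pos_ge0 b.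
have ga := pos_ge a; have gb := pos_ge b.
have h1 : pos_part ((1 - e) * a + e * b) <= (1 - e) * pos_part a + e * pos_part b.
  rewrite /pos_part ge_max; apply/andP; split.
  - rewrite -/(pos_part a) -/(pos_part b).
    apply: lerD; [apply: ler_wpM2l; lra| apply: ler_wpM2l]; lra.
  - rewrite -/(pos_part a) -/(pos_part b).
    apply: addr_ge0; apply: mulr_ge0; lra.
have h0 := pos_ge0 ((1 - e) * a + e * b).
set P := pos_part ((1 - e) * a + e * b) in h0 h1 *.
set A := pos_part a in pa h1 *; set B := pos_part b in pb h1 *.
have hQ : ((1 - e) * A + e * B) ^+ 2 <= (1 - e) * A ^+ 2 + e * B ^+ 2.
  rewrite -subr_ge0.
  have -> : (1 - e) * A ^+ 2 + e * B ^+ 2 - ((1 - e) * A + e * B) ^+ 2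
          = e * (1 - e) * (A - B) ^+ 2 by ring.
  apply: mulr_ge0; [apply: mulr_ge0; lra| exact: sqr_ge0].
apply: le_trans hQ.
rewrite ler_sqr ?nnegrE //; apply: addr_ge0; apply: mulr_ge0; lra.
Qed.

Definition Tm (lam : R) (al : pidx D S -> R) :=
  (lam * eta) / 2 * sqnorm (mvec x eta lam al).

Lemma Tm_eq lam al : 0 < lam -> 0 < eta ->
  Tm lam al = \sum_k pos_part (Cmul x al k - lam) ^+ 2 / (2 * lam * eta).
Proof.
move=> hl he; rewrite /Tm /sqnorm /mvec mulr_sumr; apply: eq_bigr => k _.
field; apply/andP; split; rewrite ?mulf_neq0 ?gt_eqF //; exact: mulr_gt0.
Qed.

Lemma Tm_bound (lam mu e : R) (al al' : pidx D S -> R) :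
  0 < lam -> 0 < mu -> 0 < eta -> 0 <= e -> e <= 1 ->
  Tm lam (fun a => (1 - e) * al a + e * (lam / mu * al' a))
  <= (1 - e) * Tm lam al + e * (lam / mu) * Tm mu al'.
Proof.
move=> hl hm he e0 e1.
rewrite !Tm_eq // !mulr_sumr -big_split /=; apply: ler_sum => k _.
rewrite (Cmul_comb (1 - e) e) .
have -> : (1 - e) * Cmul x al k + e * Cmul x (fun a => lam / mu * al' a) k - lam
   = (1 - e) * (Cmul x al k - lam) + e * (lam / mu * (Cmul x al' k - mu)).
  have -> : Cmul x (fun a => lam / mu * al' a) k = lam / mu * Cmul x al' k.
    by rewrite /Cmul mulr_sumr; apply: eq_bigr => a _; ring.
  field; rewrite gt_eqF //.
have hc : 0 < lam / mu by rewrite divr_gt0.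
have := @pos_convex e (Cmul x al k - lam) (lam / mu * (Cmul x al' k - mu)) e0 e1.
rewrite pos_scale // => H.
have hd : 0 < 2 * lam * eta by rewrite !mulr_gt0.
apply: (le_trans (ler_wpM2r _ H)); first by rewrite invr_ge0 ltW.
set A := pos_part (Cmul x al k - lam); set B := pos_part (Cmul x al' k - mu).
rewrite le_eqVlt; apply/orP; left; apply/eqP.
field; rewrite !gt_eqF // ?mulr_gt0 //; lra.
Qed.

Definition Qf (al : pidx D S -> R) :=
  - (1/4) * sqnorm al + \sum_(a : pidx D S) tvec L U a * al a.

Lemma Dual_eq lam al : Dual x L U eta lam al = Qf al - Tm lam al.
Proof. by []. Qed.

Lemma QfE al : Qf al = \sum_a (- (1/4) * al a ^+ 2 + tvec L U a * al a).
Proof. by rewrite /Qf /sqnorm big_split /= mulr_sumr. Qed.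

End Helpers.

Theorem theorem2 (R : realFieldType) (n K p : nat) (D S : 'I_n -> {set 'I_n})
  (x : 'I_n -> 'I_p -> R) (L U eta lam0 lam1 : R)
  (alpha0 alpha1 : pidx D S -> R) :
  (1 <= n)%N -> (1 <= K)%N -> (1 <= p)%N ->
  (forall i k, 0 <= x i k) ->
  (forall i, #|D i| = K) -> (forall i, #|S i| = K) ->
  U <= L -> 0 <= U -> 0 < eta ->
  0 < lam0 -> 0 < lam1 ->
  dual_optimal x L U eta lam0 alpha0 ->
  dual_optimal x L U eta lam1 alpha1 ->
  sqnorm (fun a => alpha1 a - (lam0 + lam1) / (2 * lam0) * alpha0 a)
  <= sqnorm (fun a => (lam0 - lam1) / (2 * lam0) * alpha0 a).
Proof.
move=> _ _ _ _ _ _ _ _ he h0 h1 [a0p opt0] [a1p opt1].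
set r := lam1 / lam0.
have hr : 0 < r by rewrite divr_gt0.
pose G a := (alpha1 a - alpha0 a) * (alpha1 a - r * alpha0 a).
pose C a := r * (lam0 / lam1 * alpha1 a - alpha0 a) ^+ 2
            + (r * alpha0 a - alpha1 a) ^+ 2.
have key : forall e, 0 < e -> e <= 1 ->
    e / 2 * \sum_a G a - e ^+ 2 / 4 * \sum_a C a <= 0.
  move=> e e0 e1.
  pose b0 a := (1 - e) * alpha0 a + e * (lam0 / lam1 * alpha1 a).
  pose b1 a := (1 - e) * alpha1 a + e * (lam1 / lam0 * alpha0 a).
  have b0p : forall a, 0 <= b0 a.
    move=> a; rewrite /b0; have := a0p a; have := a1p a => ha1 ha0.
    have hq : 0 <= lam0 / lam1 by rewrite ltW // divr_gt0.
    have hq' : 0 <= lam1 / lam0 by rewrite ltW // divr_gt0.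
    apply: addr_ge0; apply: mulr_ge0; try lra; exact: mulr_ge0.
  have b1p : forall a, 0 <= b1 a.
    move=> a; rewrite /b1; have := a0p a; have := a1p a => ha1 ha0.
    have hq : 0 <= lam0 / lam1 by rewrite ltW // divr_gt0.
    have hq' : 0 <= lam1 / lam0 by rewrite ltW // divr_gt0.
    apply: addr_ge0; apply: mulr_ge0; try lra; exact: mulr_ge0.
  have o0 := opt0 b0 b0p; have o1 := opt1 b1 b1p.
  rewrite !Dual_eq in o0 o1.
  have t0 := Tm_bound x alpha0 alpha1 h0 h1 he (ltW e0) e1.
  have t1 := Tm_bound x alpha1 alpha0 h1 h0 he (ltW e0) e1.
  rewrite -/(b0) in t0; rewrite -/(b1) in t1.
  set T0 := Tm x eta lam0 alpha0 in o0 t0 t1.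
  set T1 := Tm x eta lam1 alpha1 in o1 t0 t1.
  have d0 : Qf L U b0 - Qf L U alpha0 <= e * (lam0 / lam1) * T1 - e * T0 by lra.
  have d1 : Qf L U b1 - Qf L U alpha1 <= e * (lam1 / lam0) * T0 - e * T1 by lra.
  have d0' := ler_wpM2l (ltW hr) d0.
  have eq0 : r * (e * (lam0 / lam1) * T1 - e * T0) + (e * (lam1 / lam0) * T0 - e * T1) = 0.
    rewrite /r; field; rewrite !gt_eqF //.
  have sum : r * (Qf L U b0 - Qf L U alpha0) + (Qf L U b1 - Qf L U alpha1)
     = e / 2 * \sum_a G a - e ^+ 2 / 4 * \sum_a C a.
    rewrite !QfE -!sumrB !mulr_sumr -big_split -sumrB /=.
    apply: eq_bigr => a _; rewrite /b0 /b1 /G /C /r; field; rewrite !gt_eqF //.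
  lra.
have SC0 : 0 <= \sum_a C a.
  apply: sumr_ge0 => a _; apply: addr_ge0; rewrite ?sqr_ge0 //.
  by apply: mulr_ge0; rewrite ?sqr_ge0 ?ltW.
have -> : sqnorm (fun a => alpha1 a - (lam0 + lam1) / (2 * lam0) * alpha0 a)
   = sqnorm (fun a => (lam0 - lam1) / (2 * lam0) * alpha0 a) + \sum_a G a.
  rewrite /sqnorm -big_split /=; apply: eq_bigr => a _; rewrite /G /r.
  field; rewrite gt_eqF //.
rewrite gerDl; set SG := \sum_a G a; set SC := \sum_a C a in SC0 key.
rewrite -/SG in key.
rewrite leNgt; apply/negP => SGp.
have hS : 0 < SG + SC by lra.
have := key (SG / (SG + SC)).
rewrite divr_gt0 // ler_pdivrMr // mul1r lerDl SC0 => /(_ isT isT) H.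
have : 0 < SG / (SG + SC) / 2 * SG - (SG / (SG + SC)) ^+ 2 / 4 * SC.
  have -> : SG / (SG + SC) / 2 * SG - (SG / (SG + SC)) ^+ 2 / 4 * SC
     = SG ^+ 2 * (2 * SG + SC) / (4 * (SG + SC) ^+ 2).
    field; rewrite gt_eqF //.
  apply: divr_gt0; last by apply: mulr_gt0; rewrite ?exprn_gt0.
  apply: mulr_gt0; rewrite ?exprn_gt0 //; lra.
lra.
Qed.
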